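(* Let $E\subseteq\mathbb R^2$ be a bounded domain. For every $U\subseteq E$ satisfying $|U|\ge|E|(1-\frac{A(E)}4)$ we have $A(U)\ge\frac{A(E)}4$.
   Context: For a bounded set $E\subseteq\mathbb R^2$ of positive measure, the Fraenkel asymmetry is $A(E)=\inf\{|E\triangle(x_0+rB)|/|E|: x_0\in\mathbb R^2,\ \pi r^2=|E|\}\in[0,1]$, where $B$ is the unit disk and $\triangle$ denotes symmetric difference. *)

(* Defs.v *)
From HB Require Import structures.
From mathcomp Require Import all_boot all_order all_algebra.
From mathcomp Require Import all_classical all_reals all_analysis.
Set Implicit Arguments. Unset Strict Implicit. Unset Printing Implicit Defensive.
Import Order.TTheory GRing.Theory Num.Theory.
Import numFieldNormedType.Exports.
Local Open Scope classical_set_scope.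
Local Open Scope ring_scope.

Definition leb2 (R : realType) : set (R * R) -> \bar R :=
  ((@lebesgue_measure R) \x (@lebesgue_measure R))%E.

Definition symdiff T (A B : set T) : set T := (A `\` B) `|` (B `\` A).

Definition disk (R : realType) (x0 : R * R) (r : R) : set (R * R) :=
  [set p | (p.1 - x0.1) ^+ 2 + (p.2 - x0.2) ^+ 2 < r ^+ 2].

(* Fraenkel asymmetry of E (finite positive measure assumed where used):
   inf over x0 and r with pi r^2 = |E| of |E Δ (x0 + r B)| / |E| *)
Definition asym (R : realType) (E : set (R * R)) : R :=
  inf [set a | exists (x0 : R * R) (r : R),
         0 <= r /\ pi * r ^+ 2 = fine (leb2 E) /\
         a = fine (leb2 (symdiff E (disk x0 r))) / fine (leb2 E)].

Definition bounded2 (R : realType) (E : set (R * R)) : Prop :=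
  exists M : R, forall p, E p -> `|p.1| <= M /\ `|p.2| <= M.

(* Main.v *)
Require Import Defs.
From HB Require Import structures.
From mathcomp Require Import all_boot all_order all_algebra.
From mathcomp Require Import all_classical all_reals all_analysis.
From mathcomp Require Import ring lra.
Import Order.TTheory GRing.Theory Num.Theory.
Import numFieldNormedType.Exports.
Local Open Scope classical_set_scope.
Local Open Scope ring_scope.
Set Implicit Arguments. Unset Strict Implicit. Unset Printing Implicit Defensive.
Section P1.
Context (R : realType).

Lemma measurable_disk (x0 : R * R) (r : R) : measurable (disk x0 r).
Proof.
have mf : measurable_fun setT (fun p : R * R => (p.1 - x0.1) ^+ 2 + (p.2 - x0.2) ^+ 2).
  apply: measurable_realfun.measurable_funD.
    apply: (measurableT_comp (f := fun x : R => (x - x0.1) ^+ 2) (g := fst)) => //.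
      apply: measurable_realfun.continuous_measurable_fun => x.
      apply: (@continuous_comp _ _ _ (fun x : R => x - _) (fun y : R => y ^+ 2)).
        by apply: continuousB => //; exact: cvg_cst.
      exact: exprn_continuous.
  apply: (measurableT_comp (f := fun x : R => (x - x0.2) ^+ 2) (g := snd)) => //.
    apply: measurable_realfun.continuous_measurable_fun => x.
    apply: (@continuous_comp _ _ _ (fun x : R => x - _) (fun y : R => y ^+ 2)).
      by apply: continuousB => //; exact: cvg_cst.
    exact: exprn_continuous.
have := mf measurableT `]-oo, (r ^+ 2)[%classic (measurable_itv _).
by rewrite setTI /disk; congr measurable; apply/seteqP; split => p /=; rewrite in_itv.
Qed.
End P1.
Section P2.
Context (R : realType).
Definition sdk (x0 : R * R) (r x : R) := Num.sqrt (r ^+ 2 - (x - x0.1) ^+ 2).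

Lemma xsection_disk (x0 : R * R) (r x : R) :
  xsection (disk x0 r) x = `](x0.2 - sdk x0 r x), (x0.2 + sdk x0 r x)[%classic.
Proof.
rewrite /xsection /disk /sdk; apply/seteqP; split => y /=; rewrite in_itv /=.
- move=> /set_mem /= H.
  have t0 : 0 < r ^+ 2 - (x - x0.1) ^+ 2.
    by rewrite subr_gt0; apply: le_lt_trans H; rewrite lerDl sqr_ge0.
  have : `|y - x0.2| < Num.sqrt (r ^+ 2 - (x - x0.1) ^+ 2).
    by rewrite -sqrtr_sqr ltr_sqrt // ltrBrDl.
  by rewrite ltr_distl.
- rewrite -ltr_distl => H; apply/mem_set => /=.
  have t0 : 0 < r ^+ 2 - (x - x0.1) ^+ 2.
    by rewrite -sqrtr_gt0; apply: le_lt_trans H.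
  by move: H; rewrite -sqrtr_sqr ltr_sqrt // ltrBrDl.
Qed.

Lemma leb2_disk_int (x0 : R * R) (r : R) :
  leb2 (disk x0 r) = (\int[lebesgue_measure]_x (2 * sdk x0 r x)%:E)%E.
Proof.
rewrite /leb2 /product_measure1 /=; apply: eq_integral => x _ /=.
rewrite xsection_disk lebesgue_measure_itv /= lte_fin.
have s0 : 0 <= sdk x0 r x by exact: sqrtr_ge0.
case: ifPn => [_|]; first by rewrite -EFinB; congr EFin; ring.
rewrite -leNgt => H.
have -> : sdk x0 r x = 0.
  by apply/eqP; rewrite eq_le s0 andbT; move: H; rewrite -subr_ge0; nra.
by rewrite mulr0.
Qed.
End P2.
Section P3.
Context (R : realType).
Definition Gf (y : R) : R := y * Num.sqrt (1 - y ^+ 2) + asin y.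

Lemma asin1 : asin (1 : R) = pi / 2.
Proof.
rewrite -[in LHS]sin_pihalf sinK // in_itv /= lexx andbT.
by rewrite ge0_cp // divr_ge0 // pi_ge0.
Qed.

Lemma asinN1 : asin (-1 : R) = - (pi / 2).
Proof.
rewrite -[in LHS]sin_pihalf -sinN sinK // in_itv /= lexx /=.
by rewrite ge0_cp // divr_ge0 // pi_ge0.
Qed.

Lemma Gf1 : Gf 1 = pi / 2.
Proof. by rewrite /Gf expr1n subrr sqrtr0 mulr0 add0r asin1. Qed.

Lemma GfN1 : Gf (-1) = - (pi / 2).
Proof. by rewrite /Gf sqrrN expr1n subrr sqrtr0 mulr0 add0r asinN1. Qed.

Lemma asin_within : {within `[(-1), 1], continuous (@asin R)}.
Proof.
have pi20 : 0 <= pi / 2 :> R by rewrite divr_ge0 // pi_ge0.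
have := @segment_can_le_continuous R (- (pi / 2)) (pi / 2) sin asin.
rewrite sinN sin_pihalf; apply.
- by rewrite ge0_cp.
- exact/continuous_subspaceT/continuous_sin.
- exact: sinK.
Qed.

Lemma Gf_within : {within `[(-1), 1], continuous Gf}.
Proof.
have -> : Gf = (fun y : R => y * Num.sqrt (1 - y ^+ 2)) + asin by [].
move=> x; apply: continuousD; last exact: asin_within.
apply: continuous_subspaceT => {}x.
have -> : (fun y : R => y * Num.sqrt (1 - y ^+ 2)) = id \* (fun y : R => Num.sqrt (1 - y ^+ 2)) by [].
apply: continuousM; first by move=> ? ?.
apply: (@continuous_comp _ _ _ (fun y : R => 1 - y ^+ 2) Num.sqrt); last exact: sqrt_continuous.
apply: continuousB; first exact: cst_continuous.
exact: exprn_continuous.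
Qed.

Lemma is_derive_Gf (y : R) : -1 < y < 1 ->
  is_derive y 1 Gf (2 * Num.sqrt (1 - y ^+ 2)).
Proof.
move=> yI.
have q0 : 0 < 1 - y ^+ 2.
  rewrite subr_gt0; case/andP: yI => a b.
  have : `|y| < 1 by rewrite ltr_norml a b.
  by move=> h; rewrite -real_normK ?num_real // expr_lt1 //.
have hq : is_derive y 1 (fun z : R => 1 - z ^+ 2) (- (2 * y)).
  have H := is_deriveB (is_derive_cst (1 : R) y 1) (is_deriveX 2 (is_derive_id y 1)).
  apply: (is_derive_eq H).
  by rewrite sub0r expr1 scaler1.
have hs : is_derive y 1 (Num.sqrt \o (fun z : R => 1 - z ^+ 2))
    ((2 * Num.sqrt (1 - y ^+ 2))^-1 * (- (2 * y))).
  have := @is_derive1_comp R Num.sqrt (fun z : R => 1 - z ^+ 2) y _ _ (is_derive1_sqrt q0) hq.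
  by [].

have hm := is_deriveM (is_derive_id y 1) hs.
have ha := is_derive1_asin yI.
have H := is_deriveD hm ha.
apply: (is_derive_eq H).
set s := Num.sqrt (1 - y ^+ 2).
have s0 : 0 < s by rewrite sqrtr_gt0.
have ss : s ^+ 2 = 1 - y ^+ 2 by rewrite sqr_sqrtr // ltW.
rewrite /= !scaler1 /GRing.scale /=.
have sn : s != 0 by rewrite gt_eqF.
apply: (mulfI sn); rewrite mulrDr mulrDr.
rewrite mulrCA mulrA mulrA (mulrC s) mulrV ?unitfE //.
rewrite -/s.
have e1 : y * s / (2 * s) * - (2 * y) = - y ^+ 2 by field.
have e2 : s * (2 * s) = 2 * s ^+ 2 by ring.
rewrite e1 e2 -expr2 ss; ring.
Qed.
End P3.
Section P4.
Context (R : realType).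

Lemma int_disk (x0 : R * R) (r : R) : 0 < r ->
  (\int[lebesgue_measure]_x (2 * sdk x0 r x)%:E)%E = (pi * r ^+ 2)%:E.
Proof.
move=> r0.
set a := x0.1.
set c := a - r. set d := a + r.
have cd : c < d by rewrite /c /d; lra.
transitivity (\int[lebesgue_measure]_(x in `[c, d]) (2 * sdk x0 r x)%:E)%E.
  rewrite [RHS]integral_mkcond; apply: eq_integral => x _.
  rewrite patchE; case: ifPn => // /negP xI.
  have -> : sdk x0 r x = 0.
    rewrite /sdk; apply/eqP; rewrite sqrtr_eq0 subr_le0.
    have : ~ (c <= x <= d) by move=> h; apply: xI; rewrite inE /= in_itv /=.
    rewrite /c /d => h.
    have : r < `|x - a|.
      rewrite ltNge; apply/negP => h2; apply: h.
      by move: h2; rewrite ler_norml; lra.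
    move=> h3; apply: ltW.
    rewrite -(real_normK (num_real (x - x0.1))) -/a.
    have n0 := normr_ge0 (x - a).
    nra.
  by rewrite mulr0.
pose h := fun x : R => r^-1 * (x - a).
pose F := fun x : R => r ^+ 2 * Gf (h x).
have hc : h c = -1 by rewrite /h /c; field; rewrite gt_eqF.
have hd : h d = 1 by rewrite /h /d; field; rewrite gt_eqF.
have hinc : forall x y, x < y -> h x < h y.
  by move=> x y xy; rewrite /h ltr_pM2l ?invr_gt0 // ltrD2r.
have hcont : continuous h.
  have -> : h = cst r^-1 \* (fun x => x - a) by [].
  move=> x; apply: continuousM; first exact: cst_continuous.
  by apply: continuousB; [move=> ? ?|exact: cst_continuous].
have dF : forall x, c < x < d -> is_derive x 1 F (2 * sdk x0 r x).
  move=> x /andP[cx xd].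
  have hI : -1 < h x < 1.
    by rewrite -hc -hd !hinc.
  have dh : is_derive x 1 h (r^-1 *: (1 - 0)).
    exact: is_deriveZ (is_deriveB (is_derive_id x 1) (is_derive_cst a x 1)).
  have dG := is_derive1_comp (is_derive_Gf hI) dh.
  have := is_deriveZ (r ^+ 2) dG.
  move=> H; apply: (is_derive_eq H).
  rewrite /sdk -/a.
  have -> : r ^+ 2 - (x - a) ^+ 2 = r ^+ 2 * (1 - h x ^+ 2).
    by rewrite /h; field; rewrite gt_eqF.
  rewrite sqrtrM ?sqr_ge0 // sqrtr_sqr ger0_norm ?ltW //.
  rewrite /GRing.scale /= subr0 mulr1.
  by field; rewrite gt_eqF.
have N11 : (-1 : R) < 1 by lra.
have [_ GL GR] := (continuous_within_itvP _ N11).1 (@Gf_within R).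
have KL : (fun y => r ^+ 2 * Gf y) y @[y --> (-1)^'+] --> r ^+ 2 * Gf (-1).
  exact: cvgMl_tmp.
have KR : (fun y => r ^+ 2 * Gf y) y @[y --> 1^'-] --> r ^+ 2 * Gf 1.
  exact: cvgMl_tmp.
rewrite (@continuous_FTC2 _ _ F _ _ cd).
- by rewrite /F hc hd GfN1 Gf1 -EFinB; congr EFin; field.
- have cf : continuous (fun x : R => 2 * sdk x0 r x); last exact: continuous_subspaceT cf.
  move=> x.
  have -> : (fun x => 2 * sdk x0 r x) = cst 2 \* (Num.sqrt \o (fun x => r ^+ 2 - (x - x0.1) ^+ 2)) by [].
  apply: continuousM; first exact: cst_continuous.
  apply: continuous_comp; last exact: sqrt_continuous.
  apply: continuousB; first exact: cst_continuous.
  apply: (@continuous_comp _ _ _ (fun x : R => x - _) (fun y : R => y ^+ 2)).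
    by apply: continuousB => //; exact: cvg_cst.
  exact: exprn_continuous.
- split.
  + move=> x; rewrite in_itv /= => /dF H. by case: H.
  + rewrite /F.
    apply: (@increasing_cvg_at_right_comp R h (fun y => r ^+ 2 * Gf y) c (BInfty _ false)).
    * by [].
    * by move=> x y _ _; exact: hinc.
    * exact: cvg_at_right_filter (hcont c).
    * by rewrite hc.
  + rewrite /F.
    apply: (@increasing_cvg_at_left_comp R h (fun y => r ^+ 2 * Gf y) (BInfty _ true) d).
    * by [].
    * by move=> x y _ _; exact: hinc.
    * exact: cvg_at_left_filter (hcont d).
    * by rewrite hd.
- move=> x; rewrite in_itv /= => /dF H.
  by rewrite derive1E; apply: (@derive_val _ _ _ _ _ _ _ H).
Qed.
End P4.
Section P5.
Context (R : realType).

Definition box (q1 q2 : rat) (n : nat) : set (R * R) :=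
  `](ratr q1 - n.+1%:R^-1), (ratr q1 + n.+1%:R^-1)[%classic `*`
  `](ratr q2 - n.+1%:R^-1), (ratr q2 + n.+1%:R^-1)[%classic.

Lemma open_measurable2 (E : set (R * R)) : open E -> measurable E.
Proof.
move=> oE.
pose B q1 q2 n := if `[< box q1 q2 n `<=` E >] then box q1 q2 n else set0.
have -> : E = \bigcup_q1 \bigcup_q2 \bigcup_n B q1 q2 n.
  apply/seteqP; split => [p Ep|p]; last first.
    move=> [q1 _ [q2 _ [n _]]]; rewrite /B; case: asboolP => // H.
    exact: H.
  have : nbhs p E by apply: open_nbhs_nbhs.
  move/nbhs_ballP => [e e0 He].
  pose n := Num.trunc (2 / e).
  set del := n.+1%:R^-1 : R.
  have del0 : 0 < del by rewrite invr_gt0 ltr0n.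
  have dele : 2 * del < e.
    have h1 := truncnS_gt (2 / e).
    rewrite -/n in h1.
    have hn : 0 < n.+1%:R :> R by rewrite ltr0n.
    have : 2 < n.+1%:R * e.
      by move: h1; rewrite ltr_pdivrMr // mulrC.
    move=> h2; rewrite /del.
    have -> : 2 * (n.+1%:R)^-1 = 2 / n.+1%:R :> R by [].
    by rewrite ltr_pdivrMr // mulrC.
  have [q1 hq1] : exists q : rat, ratr q \in `](p.1 - del), (p.1 + del)[.
    by apply: rat_in_itvoo; lra.
  have [q2 hq2] : exists q : rat, ratr q \in `](p.2 - del), (p.2 + del)[.
    by apply: rat_in_itvoo; lra.
  move: hq1 hq2; rewrite !in_itv /= => /andP[a1 b1] /andP[a2 b2].
  have sub : box q1 q2 n `<=` E.
    move=> z [/= z1 z2]; apply: He; move: z1 z2; rewrite !in_itv /= -/del.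
    move=> /andP[c1 d1] /andP[c2 d2].
    split; rewrite /ball /= ltr_distl; apply/andP; split; lra.
  exists q1 => //; exists q2 => //; exists n => //.
  rewrite /B; case: asboolP => // _.
  split; rewrite /= in_itv /= -/del; apply/andP; split; lra.
apply: bigcupT_measurable_rat => q1; apply: bigcupT_measurable_rat => q2.
apply: bigcupT_measurable => n; rewrite /B; case: asboolP => _ //.
by apply: measurableX; exact: measurable_itv.
Qed.
End P5.
Section P6.
Context (R : realType).
Local Open Scope ereal_scope.

Lemma leb2_ge0 (A : set (R * R)) : 0 <= leb2 A.
Proof. exact: measure_ge0. Qed.

Lemma finE (A : \bar R) (b : R) : 0 <= A -> A <= b%:E -> A = (fine A)%:E.
Proof.
move=> A0 Ab; rewrite fineK // ge0_fin_numE //.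
exact: le_lt_trans Ab (ltry _).
Qed.

Lemma sd_le (A B : set (R * R)) : measurable A -> measurable B ->
  leb2 (symdiff A B) <= leb2 A + leb2 B.
Proof.
move=> mA mB.
apply: (le_trans _ (measureU2 (leb2 (R:=R)) mA mB)).
apply: le_measure; rewrite ?inE.
- by apply: measurableU; apply: measurableD.
- exact: measurableU.
- by move=> p [[]|[]]; [left|right].
Qed.

Lemma sd_tri (A B C : set (R * R)) : measurable A -> measurable B -> measurable C ->
  leb2 (symdiff A C) <= leb2 (symdiff A B) + leb2 (symdiff B C).
Proof.
move=> mA mB mC.
have mS : forall X Y : set (R * R), measurable X -> measurable Y -> measurable (symdiff X Y).
  by move=> X Y mX mY; apply: measurableU; apply: measurableD.
apply: (le_trans _ (measureU2 (leb2 (R:=R)) (mS _ _ mA mB) (mS _ _ mB mC))).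
apply: le_measure; rewrite ?inE.
- exact: mS.
- by apply: measurableU; apply: mS.
- move=> p [[Ap Cp]|[Cp Ap]].
  + by case: (pselect (B p)) => Bp; [right; left|left; left].
  + by case: (pselect (B p)) => Bp; [left; right|right; right].
Qed.

Lemma sd_sub (A B : set (R * R)) : measurable A -> measurable B -> B `<=` A ->
  leb2 A < +oo -> leb2 (symdiff A B) = leb2 A - leb2 B.
Proof.
move=> mA mB BA Afin.
have -> : symdiff A B = A `\` B.
  apply/seteqP; split => p; first by case=> // -[Bp Ap]; exfalso; exact: Ap (BA _ Bp).
  by move=> h; left.
have H := measureD (mu := leb2 (R:=R)) mA mB Afin.
have AB : A `&` B = B.
  by apply/seteqP; split => p; [case|move=> Bp; split => //; exact: BA].
rewrite AB in H; exact: H.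
Qed.
End P6.

Lemma L_a2 (R : realFieldType) (a e w : R) : 0 < e -> a <= w / e -> w <= e + e -> a <= 2.
Proof.
move=> e0 h1 h2; apply: (le_trans h1); rewrite ler_pdivrMr //; lra.
Qed.

Lemma L_u0 (R : realFieldType) (a e : R) : 0 < e -> a <= 2 -> e * (1 - a / 4) <= 0 -> False.
Proof. move=> e0 a2 h; nra. Qed.

Lemma L_fin (R : realFieldType) (a e u x w : R) : 0 < u -> u <= e -> 0 <= a ->
  a <= w / e -> w <= e - u + (x + (e - u)) -> e * (1 - a / 4) <= u -> a / 4 <= x / u.
Proof.
move=> u0 ue a0 h1 h2 h3.
have e0 : 0 < e by exact: (lt_le_trans u0 ue).
rewrite ler_pdivlMr // in h1.
rewrite ler_pdivlMr //.
have h4 : 0 <= a * (e - u) by apply: mulr_ge0; lra.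
nra.
Qed.

Section P7.
Context (R : realType).

Lemma leb2_disk (x0 : R * R) (r : R) : 0 <= r -> leb2 (disk x0 r) = (pi * r ^+ 2)%:E.
Proof.
rewrite le_eqVlt => /predU1P[<-|r0]; last by rewrite leb2_disk_int int_disk.
rewrite leb2_disk_int expr0n mulr0 /=.
rewrite (eq_integral (fun _ => 0%E)); first exact: integral0.
move=> x _; rewrite /sdk expr0n /= sub0r.
rewrite (_ : Num.sqrt _ = 0) ?mulr0 //.
by apply/eqP; rewrite sqrtr_eq0 oppr_le0 sqr_ge0.
Qed.

Lemma radius (t : R) : 0 <= t -> exists r, 0 <= r /\ pi * r ^+ 2 = t.
Proof.
move=> t0; exists (Num.sqrt (t / pi)); split; first exact: sqrtr_ge0.
have p0 : 0 < pi :> R := pi_gt0 R.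
rewrite sqr_sqrtr; last by rewrite divr_ge0 // ltW.
by rewrite mulrC divfK // gt_eqF.
Qed.

Definition ASet (A : set (R * R)) : set R := [set a | exists (x0 : R * R) (r : R),
         0 <= r /\ pi * r ^+ 2 = fine (leb2 A) /\
         a = fine (leb2 (symdiff A (disk x0 r))) / fine (leb2 A)].

Lemma asymE (A : set (R * R)) : asym A = inf (ASet A). Proof. by []. Qed.

Lemma leb2_fine_ge0 (A : set (R * R)) : 0 <= fine (leb2 A).
Proof. exact/fine_ge0/leb2_ge0. Qed.

Lemma aset_ne (A : set (R * R)) : ASet A !=set0.
Proof.
have [r [r0 hr]] := radius (leb2_fine_ge0 A).
by exists (fine (leb2 (symdiff A (disk (0, 0) r))) / fine (leb2 A)), (0, 0), r.
Qed.

Lemma aset_lb (A : set (R * R)) : lbound (ASet A) 0.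
Proof.
move=> y [x0 [r [_ [_ ->]]]].
by apply: divr_ge0; apply: leb2_fine_ge0.
Qed.

Lemma asym_ge0 (A : set (R * R)) : 0 <= asym A.
Proof. exact: lb_le_inf (aset_ne A) (@aset_lb A). Qed.

Lemma asym_le (A : set (R * R)) (x0 : R * R) (r : R) : 0 <= r -> pi * r ^+ 2 = fine (leb2 A) ->
  asym A <= fine (leb2 (symdiff A (disk x0 r))) / fine (leb2 A).
Proof.
move=> r0 hr; rewrite asymE; apply: ge_inf; first by exists 0; exact: aset_lb.
by exists x0, r.
Qed.

Lemma symdiffC (A B : set (R * R)) : symdiff A B = symdiff B A.
Proof. exact: setUC. Qed.

Lemma disk_sub x0 (r r' : R) : r ^+ 2 <= r' ^+ 2 -> disk x0 r `<=` disk x0 r'.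
Proof. by move=> h p; rewrite /disk /= => H; apply: lt_le_trans h. Qed.

Lemma leb2_bounded (E : set (R * R)) : bounded2 E -> measurable E -> (leb2 E < +oo)%E.
Proof.
move=> [M HM] mE.
pose I := `[(- M), M]%classic : set R.
have mI : measurable I by exact: measurable_itv.
have sub : E `<=` I `*` I.
  move=> p /HM [h1 h2]; split; rewrite /I /= in_itv /=.
  - by move: h1; rewrite ler_norml.
  - by move: h2; rewrite ler_norml.
have [m Im] : exists m : R, lebesgue_measure I = m%:E.
  rewrite /I lebesgue_measure_itv /=; case: ifP => _.
  - by exists (M - - M); rewrite EFinB.
  - by exists 0.
apply: (@le_lt_trans _ _ (leb2 (I `*` I))).
  apply: le_measure; rewrite ?inE //; exact: measurableX.
rewrite /leb2 product_measure1E //.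
have H : (lebesgue_measure I * lebesgue_measure I < +oo)%E by rewrite Im -EFinM; exact: ltry.
exact: H.
Qed.

End P7.

Unset Implicit Arguments.

Theorem lemma4p4 (R : realType) (E : set (R * R)) :
  open E -> connected E -> E !=set0 -> bounded2 E ->
  forall U : set (R * R), measurable U -> U `<=` E ->
  (leb2 E * (1 - asym E / 4)%:E <= leb2 U)%E ->
  asym E / 4 <= asym U.
Proof.
move=> oE _ _ bE U mU UE hyp.
have mE := open_measurable2 oE.
have Efin := leb2_bounded bE mE.
have UleE : (leb2 U <= leb2 E)%E by apply: le_measure; rewrite ?inE.
set e := fine (leb2 E).
set u := fine (leb2 U).
have Ee : leb2 E = e%:E by rewrite fineK // ge0_fin_numE // leb2_ge0.
have Ue : leb2 U = u%:E.
  by rewrite fineK // ge0_fin_numE ?leb2_ge0 //; exact: le_lt_trans Efin.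
have ue : u <= e by rewrite -lee_fin -Ue -Ee.
have u0 : 0 <= u by exact: leb2_fine_ge0.
have e0 : 0 <= e by exact: leb2_fine_ge0.
set a := asym E.
have a0 : 0 <= a by exact: asym_ge0.
have hyp' : e * (1 - a / 4) <= u by rewrite -lee_fin EFinM -Ee -Ue.
have aU0 := asym_ge0 U.
have [R' [R'0 hR']] := radius e0.
have [e00|epos] : e = 0 \/ 0 < e.
  by move: e0; rewrite le_eqVlt => /predU1P[<-|]; [left|right].
  have := asym_le (0, 0) R'0 hR'; rewrite -/e -/a e00 invr0 mulr0 => h.
  have a00 : a = 0 by apply/eqP; rewrite eq_le h a0.
  by rewrite a00 mul0r.
have D0 := measurable_disk (0, 0) R'.
have a2 : a <= 2.
  have := asym_le (0, 0) R'0 hR'; rewrite -/e -/a => h.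
  have h1 := sd_le mE D0.
  rewrite Ee leb2_disk // hR' -EFinD in h1.
  have h2 := finE (leb2_ge0 _) h1.
  rewrite h2 lee_fin in h1.
  exact: (L_a2 epos h h1).
have [u00|upos] : u = 0 \/ 0 < u.
  by move: u0; rewrite le_eqVlt => /predU1P[<-|]; [left|right].
  by exfalso; apply: (L_u0 epos a2); rewrite -u00.
apply: lb_le_inf (aset_ne U) _.
move=> y [x0 [r [r0 [hr ->]]]].
rewrite -/u in hr *.
have mD := measurable_disk x0 r.
have mD' := measurable_disk x0 R'.
have pi0 : 0 < pi :> R := pi_gt0 R.
have rR : r ^+ 2 <= R' ^+ 2.
  rewrite -(ler_pM2l pi0) hr hR' //.
have DD := disk_sub (x0 := x0) rR.
have LD : leb2 (disk x0 r) = u%:E by rewrite leb2_disk // hr.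
have LD' : leb2 (disk x0 R') = e%:E by rewrite leb2_disk // hR'.
have sDD : leb2 (symdiff (disk x0 R') (disk x0 r)) = (e - u)%:E.
  rewrite sd_sub //; last by rewrite LD'; exact: ltry.
  by rewrite LD LD' EFinB.
have sEU : leb2 (symdiff E U) = (e - u)%:E.
  by rewrite sd_sub // Ee Ue EFinB.
have hx := sd_le mU mD.
rewrite Ue LD -EFinD in hx.
have hx2 := finE (leb2_ge0 _) hx.
set x := fine (leb2 (symdiff U (disk x0 r))) in hx2 *.
have t1 := sd_tri mE mU mD'.
have t2 := sd_tri mU mD mD'.
rewrite (@symdiffC R (disk x0 r) (disk x0 R')) sDD hx2 in t2.
rewrite sEU in t1.
have t3 := le_trans t1 (leeD2l _ t2).
rewrite -!EFinD in t3.
have hw := finE (leb2_ge0 _) t3.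
rewrite hw lee_fin in t3.
have := asym_le x0 R'0 hR'; rewrite -/e -/a => ha.
exact: (L_fin upos ue a0 ha t3 hyp').
Qed.
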